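(* Let $T>0$ and $\beta\in\mathbb{R}$ with $|\beta|<\frac{1}{2T}$. Then the boundary value problem $$\left(\frac{u'}{\sqrt{1+u'^2}}\right)'=\beta\cos u\ \text{on }[0,T],\qquad u(0)=u(T)=u'(T)$$ has at least one solution.
   Context: A solution is a function $u\in C^1([0,T],\mathbb{R})$ satisfying the boundary conditions such that $t\mapsto u'(t)/\sqrt{1+u'(t)^2}$ is continuously differentiable and the equation holds for all $t\in[0,T]$. *)

(* Defs.v *)
From Stdlib Require Import Reals.
Open Scope R_scope.

Definition has_deriv_on (a b : R) (f : R -> R) (x l : R) : Prop :=
  forall eps : R, eps > 0 -> exists delta : R, delta > 0 /\
    forall h : R, h <> 0 -> Rabs h < delta -> a <= x + h <= b ->
      Rabs ((f (x + h) - f x) / h - l) < eps.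

Definition continuous_on_at (a b : R) (f : R -> R) (x : R) : Prop :=
  forall eps : R, eps > 0 -> exists delta : R, delta > 0 /\
    forall y : R, a <= y <= b -> Rabs (y - x) < delta -> Rabs (f y - f x) < eps.

Definition C1_on (a b : R) (f f' : R -> R) : Prop :=
  (forall x, a <= x <= b -> has_deriv_on a b f x (f' x)) /\
  (forall x, a <= x <= b -> continuous_on_at a b f' x).

Definition phi (v : R) : R := v / sqrt (1 + v ^ 2).

Definition is_solution (T beta : R) (u : R -> R) : Prop :=
  exists u' : R -> R,
    C1_on 0 T u u' /\
    C1_on 0 T (fun t => phi (u' t)) (fun t => beta * cos (u t)) /\
    u 0 = u T /\ u T = u' T.

(* Main.v *)
Require Import Defs.
From Stdlib Require Import Reals Lra Psatz.
From Coquelicot Require Import Coquelicot.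
Open Scope R_scope.

Definition psi (w : R) : R := w / sqrt (1 - w ^ 2).
Definition dpsi (w : R) : R := / ((1 - w^2) * sqrt (1 - w ^ 2)).

Lemma psi_deriv w : -1 < w < 1 -> is_derive psi w (dpsi w).
Proof.
intros Hw. unfold psi, dpsi.
assert (H1 : 0 < 1 - w^2) by (simpl; nra).
assert (Hs := sqrt_lt_R0 _ H1).
assert (Hss := sqrt_sqrt (1 - w^2) (Rlt_le _ _ H1)).
auto_derive.
- replace (1 + - (w*(w*1))) with (1 - w^2) by ring. repeat split; try lra.
- replace (1 + - (w*(w*1))) with (1 - w^2) by ring.
  set (s := sqrt (1 - w^2)) in *.
  assert (E : w*w = 1 - s*s) by (simpl in Hss; lra).
  transitivity ((s*s + w*w)/(s*s*s)). field; lra.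
  replace (w^2) with (w*w) by ring. rewrite E. field; lra.
Qed.

Lemma sqrt_ge_self x : 0 <= x <= 1 -> x <= sqrt x.
Proof.
intros Hx. assert (H1 := sqrt_sqrt x (proj1 Hx)).
assert (H2 : sqrt x <= 1) by (rewrite <- sqrt_1; apply sqrt_le_1_alt; lra).
assert (H3 := sqrt_pos x). nra.
Qed.

Lemma abs_inv a b : Rabs a <= b -> -b <= a <= b.
Proof. unfold Rabs; destruct (Rcase_abs a); lra. Qed.

Definition Lr (r : R) := / ((1 - r^2) * (1 - r^2)).

Lemma dpsi_bound r c : 0 <= r < 1 -> Rabs c <= r -> 0 < dpsi c <= Lr r.
Proof.
intros Hr Hc. unfold dpsi, Lr.
assert (Hc2 : c^2 <= r^2) by (rewrite <- (pow2_abs c); apply pow_incr; split; [apply Rabs_pos|lra]).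
assert (H1 : 0 < 1 - c^2) by nra.
assert (Hs := sqrt_ge_self (1 - c^2) ltac:(split; nra)).
split.
- apply Rinv_0_lt_compat. apply Rmult_lt_0_compat; lra.
- apply Rinv_le_contravar. apply Rmult_lt_0_compat; nra.
  apply Rmult_le_compat; nra.
Qed.

Lemma psi_lip r a b : 0 <= r < 1 -> Rabs a <= r -> Rabs b <= r ->
  Rabs (psi a - psi b) <= Lr r * Rabs (a - b).
Proof.
intros Hr Ha Hb.
assert (Hd : forall x, Rabs x <= r -> is_derive psi x (dpsi x)).
{ intros x Hx. apply psi_deriv. apply abs_inv in Hx. lra. }
destruct (MVT_gen psi b a dpsi) as [c [Hc Heq]].
- intros x Hx. apply Hd. apply Rabs_le.
  apply abs_inv in Ha; apply abs_inv in Hb.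
  unfold Rmin, Rmax in Hx; destruct (Rle_dec b a); lra.
- intros x Hx. apply continuity_pt_filterlim. apply (ex_derive_continuous psi).
  eexists. apply Hd. apply Rabs_le.
  apply abs_inv in Ha; apply abs_inv in Hb.
  unfold Rmin, Rmax in Hx; destruct (Rle_dec b a); lra.
- rewrite Heq, Rabs_mult.
  assert (Hc' : Rabs c <= r).
  { apply Rabs_le. apply abs_inv in Ha; apply abs_inv in Hb.
    unfold Rmin, Rmax in Hc; destruct (Rle_dec b a); lra. }
  destruct (dpsi_bound r c Hr Hc'). rewrite Rabs_pos_eq by lra.
  apply Rmult_le_compat_r; [apply Rabs_pos|lra].
Qed.


Lemma phi_psi w : -1 < w < 1 -> phi (psi w) = w.
Proof.
intros Hw. unfold phi, psi.
assert (H1 : 0 < 1 - w^2) by (simpl; nra).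
assert (Hs := sqrt_lt_R0 _ H1).
assert (Hss := sqrt_sqrt (1 - w^2) (Rlt_le _ _ H1)).
set (s := sqrt (1 - w^2)) in *.
replace (1 + (w / s)^2) with ((/ s)^2).
- rewrite sqrt_pow2. field; lra. apply Rlt_le, Rinv_0_lt_compat; lra.
- assert (E : w*w = 1 - s*s) by (simpl in Hss; lra).
  simpl. field_simplify; try lra. replace (w^2) with (w*w) by ring. rewrite E. field. lra.
Qed.

Lemma psi_phi v : psi (phi v) = v.
Proof.
unfold phi, psi.
assert (H1 : 0 < 1 + v^2) by nra.
assert (Hs := sqrt_lt_R0 _ H1).
assert (Hss := sqrt_sqrt (1 + v^2) (Rlt_le _ _ H1)).
set (s := sqrt (1 + v^2)) in *.
replace (1 - (v / s)^2) with ((/ s)^2).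
- rewrite sqrt_pow2. field; lra. apply Rlt_le, Rinv_0_lt_compat; lra.
- assert (E : v*v = s*s - 1) by (simpl in Hss; lra).
  simpl. field_simplify; try lra. replace (v^2) with (v*v) by ring. rewrite E. field. lra.
Qed.

Lemma phi_bound v : -1 < phi v < 1.
Proof.
unfold phi.
assert (H1 : 0 < 1 + v^2) by nra.
assert (Hs := sqrt_lt_R0 _ H1).
assert (Hss := sqrt_sqrt (1 + v^2) (Rlt_le _ _ H1)).
set (s := sqrt (1 + v^2)) in *.
assert (v < s) by nra. assert (-v < s) by nra.
split.
- apply (Rmult_lt_reg_r s); [lra|]. unfold Rdiv. rewrite Rmult_assoc, Rinv_l; lra.
- apply (Rmult_lt_reg_r s); [lra|]. unfold Rdiv. rewrite Rmult_assoc, Rinv_l; lra.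
Qed.

Lemma phi_cont v : continuous phi v.
Proof.
apply (@ex_derive_continuous R_AbsRing R_NormedModule). unfold phi. auto_derive.
assert (H1 : 0 < 1 + v*(v*1)) by nra.
repeat split; try lra. apply Rgt_not_eq, sqrt_lt_R0; lra.
Qed.

Ltac dest_le := repeat (match goal with |- context [Rle_dec ?x ?y] => destruct (Rle_dec x y)
  | H : context [Rle_dec ?x ?y] |- _ => destruct (Rle_dec x y) end).

Definition clamp (r w : R) := Rmax (-r) (Rmin r w).

Lemma clamp_lip r a b : 0 <= r -> Rabs (clamp r a - clamp r b) <= Rabs (a - b).
Proof.
intros Hr. unfold clamp, Rmax, Rmin.
dest_le;
unfold Rabs; repeat destruct Rcase_abs; lra.
Qed.

Lemma clamp_bound r w : 0 <= r -> Rabs (clamp r w) <= r.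
Proof.
intros Hr. unfold clamp, Rmax, Rmin.
dest_le;
unfold Rabs; repeat destruct Rcase_abs; lra.
Qed.

Lemma clamp_id r w : Rabs w <= r -> clamp r w = w.
Proof.
intros Hw. apply abs_inv in Hw. unfold clamp, Rmax, Rmin.
dest_le; lra.
Qed.

Definition g (r w : R) := psi (clamp r w).

Lemma Lr_pos r : 0 <= r < 1 -> 0 < Lr r.
Proof. intros. unfold Lr. apply Rinv_0_lt_compat. assert (0 < 1 - r^2) by nra. apply Rmult_lt_0_compat; lra. Qed.

Lemma g_lip r a b : 0 <= r < 1 -> Rabs (g r a - g r b) <= Lr r * Rabs (a - b).
Proof.
intros Hr. unfold g.
eapply Rle_trans. apply (psi_lip r); [lra|apply clamp_bound; lra|apply clamp_bound; lra].
apply Rmult_le_compat_l. apply Rlt_le, Lr_pos; lra.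
apply clamp_lip; lra.
Qed.


Lemma g_bound r w : 0 <= r < 1 -> Rabs (g r w) <= Lr r.
Proof.
intros Hr.
assert (H0 : psi 0 = 0) by (unfold psi; unfold Rdiv; ring).
unfold g. rewrite <- (Rminus_0_r (psi _)), <- H0.
eapply Rle_trans. apply (psi_lip r); [lra|apply clamp_bound; lra|rewrite Rabs_R0; lra].
assert (HL := Lr_pos r Hr).
assert (Hc := clamp_bound r w (proj1 Hr)). rewrite Rminus_0_r.
assert (Lr r * Rabs (clamp r w) <= Lr r * 1) by (apply Rmult_le_compat_l; lra). lra.
Qed.

Definition cont (f : R -> R) := forall x, continuous f x.

Lemma lip_cont f M : 0 <= M -> (forall x y, Rabs (f x - f y) <= M * Rabs (x - y)) -> cont f.
Proof.
intros HM Hf x. apply continuity_pt_filterlim.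
intros eps Heps. exists (eps / (M + 1)). split.
- apply Rdiv_lt_0_compat; lra.
- intros y [_ Hy]. simpl in *. unfold Rdist in *.
  eapply Rle_lt_trans. apply Hf.
  apply Rle_lt_trans with (M * (eps / (M+1))).
  apply Rmult_le_compat_l; lra.
  assert (0 < eps/(M+1)) by (apply Rdiv_lt_0_compat; lra).
  replace eps with ((M+1) * (eps/(M+1))) at 2 by (field; lra). nra.
Qed.

Lemma cos_lip x y : Rabs (cos x - cos y) <= 1 * Rabs (x - y).
Proof.
destruct (MVT_gen cos y x (fun t => - sin t)) as [c [_ Hc]].
- intros t _. auto_derive; auto. ring.
- intros t _. apply continuity_pt_filterlim. apply (@ex_derive_continuous R_AbsRing R_NormedModule).
  auto_derive; auto.
- rewrite Hc, Rabs_mult. rewrite Rabs_Ropp. apply Rmult_le_compat_r. apply Rabs_pos.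
  apply Rabs_le. apply SIN_bound.
Qed.

Lemma cont_cos_comp u : cont u -> cont (fun s => cos (u s)).
Proof.
intros Hu x. apply (continuous_comp u cos). apply Hu.
apply (lip_cont cos 1); [lra| apply cos_lip].
Qed.

Lemma cont_ex h a b : cont h -> ex_RInt h a b.
Proof. intros Hh. apply (@ex_RInt_continuous R_CompleteNormedModule). intros; apply Hh. Qed.

Lemma RInt_minusR f h a b : cont f -> cont h ->
  RInt (fun x => f x - h x) a b = RInt f a b - RInt h a b.
Proof. intros Hf Hh. apply (@RInt_minus R_CompleteNormedModule f h a b); apply cont_ex; auto. Qed.

Lemma deriv_int h T t : cont h -> is_derive (fun t => RInt h t T) t (- h t).
Proof.
intros Hh. apply (@is_derive_RInt' R_CompleteNormedModule h (fun t => RInt h t T) t T).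
- apply filter_forall. intros x. apply (@RInt_correct R_CompleteNormedModule). apply cont_ex; auto.
- apply Hh.
Qed.

Lemma cont_int h T : cont h -> cont (fun t => RInt h t T).
Proof.
intros Hh t. apply (@ex_derive_continuous R_AbsRing R_NormedModule).
eexists. apply deriv_int; auto.
Qed.

Section ODE.
Variables T beta : R.
Hypothesis hT : 0 < T.
Hypothesis hbT : Rabs beta * T < 1/2.

Definition rr := 1/2 + Rabs beta * T.
Lemma rr_range : 0 <= rr < 1.
Proof. unfold rr. assert (0 <= Rabs beta * T) by (apply Rmult_le_pos; [apply Rabs_pos|lra]). lra. Qed.

Definition Gf (w : R) := g rr w.
Definition LL := Lr rr.
Definition KK := LL + Rabs beta + 1.
Definition lam := 2 * KK.
Definition EE (t : R) := exp (lam * (T - t)).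

Lemma LL_pos : 0 < LL.
Proof. apply Lr_pos, rr_range. Qed.
Lemma KK_pos : 0 < KK.
Proof. unfold KK. assert (H := LL_pos). assert (H2 := Rabs_pos beta). lra. Qed.
Lemma lam_pos : 0 < lam.
Proof. unfold lam. assert (H := KK_pos). lra. Qed.
Lemma EE_ge1 t : t <= T -> 1 <= EE t.
Proof.
intros Ht. unfold EE. rewrite <- exp_0. destruct (Req_dec t T) as [->|].
- rewrite Rminus_diag, Rmult_0_r; lra.
- left. apply exp_increasing. assert (Hl := lam_pos). apply Rmult_lt_0_compat; lra.
Qed.
Lemma EE_cont : cont EE.
Proof.
intros x. apply (@ex_derive_continuous R_AbsRing R_NormedModule). unfold EE. auto_derive. auto.
Qed.

Lemma int_EE t : t <= T -> forall B, RInt (fun s => B * EE s) t T = B * (EE t - 1) / lam.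
Proof.
intros Ht B. apply is_RInt_unique.
assert (Hl := lam_pos).
replace (B * (EE t - 1) / lam) with (minus ((fun s => - B * EE s / lam) T) ((fun s => - B * EE s / lam) t)).
2:{ unfold minus, plus, opp; simpl. unfold EE. rewrite Rminus_diag, Rmult_0_r, exp_0. field. lra. }
apply (@is_RInt_derive R_CompleteNormedModule (fun s => - B * EE s / lam)).
- intros x _. unfold EE. auto_derive. auto. replace (T + - x) with (T - x) by ring. field. lra.
- intros x _. apply (@continuous_mult R_UniformSpace R_AbsRing (fun _ => B) EE). apply continuous_const. apply EE_cont.
Qed.

Lemma int_E_bound h B t : t <= T -> cont h ->
  (forall s, t <= s <= T -> Rabs (h s) <= B * EE s) ->
  Rabs (RInt h t T) <= B * EE t / lam.
Proof.
intros Ht Hh Hb.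
assert (HB : 0 <= B).
{ assert (H1 := Hb T ltac:(lra)). unfold EE in H1. rewrite Rminus_diag, Rmult_0_r, exp_0 in H1.
  assert (H2 := Rabs_pos (h T)). lra. }
eapply Rle_trans. apply abs_RInt_le; [lra| apply cont_ex; auto].
eapply Rle_trans. apply RInt_le with (g := fun s => B * EE s); [lra| | |].
- apply cont_ex. intros x. apply (continuous_comp h Rabs). apply Hh. apply continuous_Rabs.
- apply cont_ex. intros x. apply (@continuous_mult R_UniformSpace R_AbsRing (fun _ => B) EE). apply continuous_const. apply EE_cont.
- intros x Hx. apply Hb. lra.
- rewrite int_EE by lra. assert (Hl := lam_pos). unfold Rdiv.
  apply Rmult_le_compat_r. left; apply Rinv_0_lt_compat; lra.
  assert (0 < EE t) by (unfold EE; apply exp_pos). nra.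
Qed.

Lemma Gf_lip a b : Rabs (Gf a - Gf b) <= LL * Rabs (a - b).
Proof. apply g_lip, rr_range. Qed.

Lemma cont_Gf_comp w : cont w -> cont (fun s => Gf (w s)).
Proof.
intros Hw x. apply (continuous_comp w Gf). apply Hw.
apply (lip_cont Gf LL); [left; apply LL_pos| apply Gf_lip].
Qed.

Definition Fu (c : R) (w : R -> R) : R -> R := fun t => c - RInt (fun s => Gf (w s)) t T.
Definition Fw (c : R) (u : R -> R) : R -> R := fun t => phi c - beta * RInt (fun s => cos (u s)) t T.

Lemma cont_minus f h : cont f -> cont h -> cont (fun x => f x - h x).
Proof.
intros Hf Hh x. apply (@continuous_plus R_UniformSpace R_AbsRing R_NormedModule f (fun x => - h x)).
apply Hf. apply (@continuous_opp R_UniformSpace R_AbsRing R_NormedModule). apply Hh.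
Qed.

Lemma cont_Fu c w : cont w -> cont (Fu c w).
Proof.
intros Hw. unfold Fu. apply cont_minus. intros x; apply continuous_const.
apply cont_int, cont_Gf_comp, Hw.
Qed.

Lemma cont_Fw c u : cont u -> cont (Fw c u).
Proof.
intros Hu. unfold Fw. apply cont_minus. intros x; apply continuous_const.
intros x. apply (@continuous_mult R_UniformSpace R_AbsRing (fun _ => beta)). apply continuous_const.
apply cont_int, cont_cos_comp, Hu.
Qed.

Lemma step_est c1 c2 u1 w1 u2 w2 A t :
  cont u1 -> cont w1 -> cont u2 -> cont w2 -> t <= T ->
  (forall s, t <= s <= T -> Rabs (u1 s - u2 s) + Rabs (w1 s - w2 s) <= A * EE s) ->
  Rabs (Fu c1 w1 t - Fu c2 w2 t) + Rabs (Fw c1 u1 t - Fw c2 u2 t)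
    <= Rabs (c1 - c2) + Rabs (phi c1 - phi c2) + A / 2 * EE t.
Proof.
intros Hu1 Hw1 Hu2 Hw2 Ht Hb.
assert (HA : 0 <= A).
{ assert (H1 := Hb T ltac:(lra)). unfold EE in H1. rewrite Rminus_diag, Rmult_0_r, exp_0 in H1.
  assert (H2 := Rabs_pos (u1 T - u2 T)). assert (H3 := Rabs_pos (w1 T - w2 T)). lra. }
assert (HL := LL_pos). assert (Hl := lam_pos).
assert (HE : 0 < EE t) by (unfold EE; apply exp_pos).
assert (I1 : Rabs (RInt (fun s => Gf (w1 s) - Gf (w2 s)) t T) <= (LL * A) * EE t / lam).
{ apply int_E_bound; auto. apply cont_minus; apply cont_Gf_comp; auto.
  intros s Hs. eapply Rle_trans. apply Gf_lip. rewrite Rmult_assoc. apply Rmult_le_compat_l. lra.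
  assert (H1 := Hb s Hs). assert (H2 := Rabs_pos (u1 s - u2 s)). lra. }
assert (I2 : Rabs (RInt (fun s => cos (u1 s) - cos (u2 s)) t T) <= (1 * A) * EE t / lam).
{ apply int_E_bound; auto. apply cont_minus; apply cont_cos_comp; auto.
  intros s Hs. eapply Rle_trans. apply cos_lip. rewrite Rmult_assoc. apply Rmult_le_compat_l. lra.
  assert (H1 := Hb s Hs). assert (H2 := Rabs_pos (w1 s - w2 s)). lra. }
rewrite RInt_minusR in I1 by (apply cont_Gf_comp; auto).
rewrite RInt_minusR in I2 by (apply cont_cos_comp; auto).
unfold Fu, Fw.
set (J1 := RInt (fun s => Gf (w1 s)) t T) in *.
set (J2 := RInt (fun s => Gf (w2 s)) t T) in *.
set (K1 := RInt (fun s => cos (u1 s)) t T) in *.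
set (K2 := RInt (fun s => cos (u2 s)) t T) in *.
replace (c1 - J1 - (c2 - J2)) with ((c1 - c2) - (J1 - J2)) by ring.
replace (phi c1 - beta * K1 - (phi c2 - beta * K2)) with ((phi c1 - phi c2) - beta * (K1 - K2)) by ring.
assert (T1 := Rabs_triang (c1 - c2) (- (J1 - J2))).
assert (T2 := Rabs_triang (phi c1 - phi c2) (- (beta * (K1 - K2)))).
rewrite Rabs_Ropp in T1, T2. rewrite Rabs_mult in T2.
unfold Rminus at 1 in T1. unfold Rminus at 2 in T2.
assert (Hb0 := Rabs_pos beta).
assert (T3 : Rabs beta * Rabs (K1 - K2) <= Rabs beta * ((1 * A) * EE t / lam)) by (apply Rmult_le_compat_l; lra).
assert (Key : LL * A * EE t / lam + Rabs beta * (1 * A * EE t / lam) <= A / 2 * EE t).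
{ assert (Eq : A / 2 * EE t - (LL * A * EE t / lam + Rabs beta * (1 * A * EE t / lam)) = A * EE t / lam).
  { unfold lam, KK. field. unfold KK in Hl. lra. }
  assert (0 <= A * EE t / lam) by (apply Rdiv_le_0_compat; [apply Rmult_le_pos|]; lra). lra. }
unfold Rminus in *. lra.
Qed.
End ODE.

Lemma deriv_lip f df M : (forall x, is_derive f x (df x)) -> (forall x, Rabs (df x) <= M) ->
  forall x y, Rabs (f x - f y) <= M * Rabs (x - y).
Proof.
intros Hd Hb x y.
destruct (MVT_gen f y x df) as [c [_ Hc]].
- intros t _. apply Hd.
- intros t _. apply continuity_pt_filterlim. apply (@ex_derive_continuous R_AbsRing R_NormedModule).
  eexists; apply Hd.
- rewrite Hc, Rabs_mult. apply Rmult_le_compat_r. apply Rabs_pos. apply Hb.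
Qed.

Lemma deriv_cminus c h T x : cont h -> is_derive (fun t => c - RInt h t T) x (h x).
Proof.
intros Hh.
assert (H := @is_derive_minus R_AbsRing R_NormedModule (fun _ => c) (fun t => RInt h t T) x _ _
   (is_derive_const c x) (deriv_int h T x Hh)).
eapply is_derive_ext; [|eapply filterdiff_ext_lin; [exact H|]].
- intros t. reflexivity.
- intros y. simpl. unfold minus, plus, opp, zero, scal; simpl. unfold mult; simpl. ring.
Qed.

Lemma deriv_ckminus c k h T x : cont h -> is_derive (fun t => c - k * RInt h t T) x (k * h x).
Proof.
intros Hh.
assert (H := @is_derive_minus R_AbsRing R_NormedModule (fun _ => c) (fun t => k * RInt h t T) x _ _
   (is_derive_const c x) (is_derive_scal _ x k _ (deriv_int h T x Hh))).
eapply is_derive_ext; [|eapply filterdiff_ext_lin; [exact H|]].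
- intros t. reflexivity.
- intros y. simpl. unfold minus, plus, opp, zero, scal; simpl. unfold mult; simpl. ring.
Qed.

Lemma le_geo x y D : 0 <= D -> (forall n, x <= y + D * (/2)^n) -> x <= y.
Proof.
intros HD H. destruct (Rle_dec x y) as [|Hn]; [auto|]. exfalso.
destruct (pow_lt_1_zero (/2) ltac:(rewrite Rabs_pos_eq; lra) ((x - y)/(D+1))) as [N HN].
apply Rdiv_lt_0_compat; lra.
specialize (HN N (le_n N)). specialize (H N).
rewrite Rabs_pos_eq in HN by (apply pow_le; lra).
assert (Hp : 0 <= (/2)^N) by (apply pow_le; lra).
assert (D * (/2)^N <= (D+1) * (/2)^N) by nra.
assert ((D+1) * (/2)^N < (D+1) * ((x-y)/(D+1))) by (apply Rmult_lt_compat_l; lra).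
replace ((D+1) * ((x-y)/(D+1))) with (x - y) in H1 by (field; lra).
lra.
Qed.

Definition lim (a : nat -> R) : R := real (Lim_seq a).

Lemma cauchy_lim (a : nat -> R) B : (forall n m, Rabs (a (m + n)%nat - a n) <= B * (/2)^n) ->
  forall n, Rabs (lim a - a n) <= B * (/2)^n.
Proof.
intros H.
assert (HB : 0 <= B).
{ specialize (H O O). simpl in H. rewrite Rminus_diag, Rabs_R0 in H. lra. }
assert (Hc : ex_finite_lim_seq a).
{ apply ex_lim_seq_cauchy_corr. intros eps.
  destruct (pow_lt_1_zero (/2) ltac:(rewrite Rabs_pos_eq; lra) (eps/(2*B+1))) as [N HN].
  apply Rdiv_lt_0_compat; [apply cond_pos|lra].
  exists N. intros n m Hn Hm.
  assert (Hp : 0 <= (/2)^N) by (apply pow_le; lra).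
  specialize (HN N (le_n N)). rewrite Rabs_pos_eq in HN by auto.
  assert (Hpn : forall k, (N <= k)%nat -> Rabs (a k - a N) <= B * (/2)^N).
  { intros k Hk. replace k with ((k - N) + N)%nat by lia. apply H. }
  assert (H1 := Hpn n Hn). assert (H2 := Hpn m Hm).
  assert (Rabs (a n - a m) <= 2 * B * (/2)^N).
  { replace (a n - a m) with ((a n - a N) - (a m - a N)) by ring.
    eapply Rle_trans. apply Rabs_triang. rewrite Rabs_Ropp. lra. }
  assert ((2*B+1) * (/2)^N < (2*B+1) * (eps/(2*B+1))) by (apply Rmult_lt_compat_l; lra).
  replace ((2*B+1) * (eps/(2*B+1))) with (pos eps) in H3 by (field; lra).
  nra. }
destruct Hc as [l Hl].
intros n. unfold lim. rewrite (is_lim_seq_unique _ _ Hl). simpl.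
assert (Hl2 : is_lim_seq (fun m => Rabs (a (m + n)%nat - a n)) (Rabs (l - a n))).
{ apply (is_lim_seq_abs _ (Finite (l - a n))).
  apply (is_lim_seq_minus _ _ (Finite l) (Finite (a n))).
  apply (is_lim_seq_incr_n a n l). exact Hl. apply is_lim_seq_const.
  simpl. reflexivity. }
assert (HH := is_lim_seq_le _ _ _ _ (fun m => H n m) Hl2 (is_lim_seq_const (B * (/2)^n))).
simpl in HH. exact HH.
Qed.

Definition clampT (T t : R) := Rmax 0 (Rmin T t).
Lemma clampT_id T t : 0 <= t <= T -> clampT T t = t.
Proof. intros. unfold clampT, Rmax, Rmin. dest_le; lra. Qed.
Lemma clampT_in T t : 0 <= T -> 0 <= clampT T t <= T.
Proof. intros. unfold clampT, Rmax, Rmin. dest_le; lra. Qed.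
Lemma clampT_lip T t s : 0 <= T -> Rabs (clampT T t - clampT T s) <= Rabs (t - s).
Proof. intros. unfold clampT, Rmax, Rmin. dest_le; unfold Rabs; repeat destruct Rcase_abs; lra. Qed.

Section Pic.
Variables T beta : R.
Hypothesis hT : 0 < T.
Hypothesis hbT : Rabs beta * T < 1/2.

Local Notation FU := (Fu T beta).
Local Notation FW := (Fw T beta).
Local Notation E := (EE T beta).

Fixpoint pic (c : R) (n : nat) : (R -> R) * (R -> R) :=
  match n with
  | O => (fun _ => c, fun _ => phi c)
  | S m => (FU c (snd (pic c m)), FW c (fst (pic c m)))
  end.

Lemma pic_cont c n : cont (fst (pic c n)) /\ cont (snd (pic c n)).
Proof.
induction n as [|n IH]; simpl.
- split; intros x; apply continuous_const.
- split. apply cont_Fu; auto; apply IH. apply cont_Fw; auto; apply IH.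
Qed.

Definition DD (X Y : (R -> R) * (R -> R)) (s : R) :=
  Rabs (fst X s - fst Y s) + Rabs (snd X s - snd Y s).

Lemma DD_triang X Y Z s : DD X Z s <= DD X Y s + DD Y Z s.
Proof.
unfold DD.
assert (H1 := Rabs_triang (fst X s - fst Y s) (fst Y s - fst Z s)).
assert (H2 := Rabs_triang (snd X s - snd Y s) (snd Y s - snd Z s)).
replace (fst X s - fst Y s + (fst Y s - fst Z s)) with (fst X s - fst Z s) in H1 by ring.
replace (snd X s - snd Y s + (snd Y s - snd Z s)) with (snd X s - snd Z s) in H2 by ring.
lra.
Qed.

Lemma pic_base c t : 0 <= t <= T -> DD (pic c 1) (pic c 0) t <= E t.
Proof.
intros Ht. unfold DD; simpl. unfold Fu, Fw.
assert (Hl := lam_pos T beta hT hbT). assert (HL := LL_pos T beta hT hbT).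
assert (HE : 0 < E t) by (unfold EE; apply exp_pos).
assert (I1 : Rabs (RInt (fun _ : R => Gf T beta (phi c)) t T) <= LL T beta * E t / lam T beta).
{ apply int_E_bound; auto; try lra. intros x; apply continuous_const.
  intros s Hs. eapply Rle_trans. apply g_bound, rr_range; auto.
  assert (1 <= E s) by (apply EE_ge1; auto; lra). unfold LL in *. nra. }
assert (I2 : Rabs (RInt (fun _ : R => cos c) t T) <= 1 * E t / lam T beta).
{ apply int_E_bound; auto; try lra. intros x; apply continuous_const.
  intros s Hs. assert (1 <= E s) by (apply EE_ge1; auto; lra).
  assert (Rabs (cos c) <= 1) by (apply Rabs_le, COS_bound). lra. }
replace (c - RInt (fun _ : R => Gf T beta (phi c)) t T - c) with (- RInt (fun _ : R => Gf T beta (phi c)) t T) by ring.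
replace (phi c - beta * RInt (fun _ : R => cos c) t T - phi c) with (- (beta * RInt (fun _ : R => cos c) t T)) by ring.
rewrite !Rabs_Ropp, Rabs_mult.
assert (Hb0 := Rabs_pos beta).
assert (Rabs beta * Rabs (RInt (fun _ : R => cos c) t T) <= Rabs beta * (1 * E t / lam T beta)) by (apply Rmult_le_compat_l; lra).
assert (Eq : E t - (LL T beta * E t / lam T beta + Rabs beta * (1 * E t / lam T beta)) = (LL T beta + Rabs beta + 2) * E t / lam T beta).
{ unfold lam, KK. field. unfold lam, KK in Hl. lra. }
assert (0 <= (LL T beta + Rabs beta + 2) * E t / lam T beta) by (apply Rdiv_le_0_compat; [apply Rmult_le_pos|]; lra).
lra.
Qed.

Lemma pic_diff c n t : 0 <= t <= T -> DD (pic c (S n)) (pic c n) t <= (/2)^n * E t.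
Proof.
revert t. induction n as [|n IH]; intros t Ht.
- simpl pow. rewrite Rmult_1_l. apply pic_base; auto.
- change (pic c (S (S n))) with (FU c (snd (pic c (S n))), FW c (fst (pic c (S n)))).
  change (pic c (S n)) with (FU c (snd (pic c n)), FW c (fst (pic c n))) at 2.
  unfold DD; simpl fst; simpl snd.
  destruct (pic_cont c n) as [C1 C2]. destruct (pic_cont c (S n)) as [C3 C4].
  eapply Rle_trans. apply (step_est T beta hT hbT c c _ _ _ _ ((/2)^n)); auto; try lra.
  + intros s Hs. apply IH. lra.
  + rewrite !Rminus_diag, !Rabs_R0. simpl pow. right; field.
Qed.

Lemma E_le0 t : 0 <= t -> E t <= E 0.
Proof.
intros Ht. unfold EE. assert (Hl := lam_pos T beta hT hbT).
destruct (Req_dec t 0) as [->|]. lra. left. apply exp_increasing. nra.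
Qed.

Lemma pic_cauchy c n m t : 0 <= t <= T ->
  DD (pic c (m + n)) (pic c n) t <= 2 * ((/2)^n - (/2)^(m + n)) * E t.
Proof.
intros Ht. induction m as [|m IH].
- unfold DD. simpl. rewrite !Rminus_diag, !Rabs_R0. lra.
- eapply Rle_trans. apply (DD_triang _ (pic c (m + n))).
  change (S m + n)%nat with (S (m + n)).
  assert (H := pic_diff c (m + n) t Ht).
  simpl pow. lra.
Qed.

Definition E0 := E 0.
Lemma E0_pos : 1 <= E0.
Proof. apply EE_ge1; auto; lra. Qed.

Lemma pic_comp_bound c n m t : 0 <= t <= T ->
  Rabs (fst (pic c (m + n)) t - fst (pic c n) t) <= 2 * E0 * (/2)^n /\
  Rabs (snd (pic c (m + n)) t - snd (pic c n) t) <= 2 * E0 * (/2)^n.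
Proof.
intros Ht. assert (H := pic_cauchy c n m t Ht). unfold DD in H.
assert (H1 := E_le0 t (proj1 Ht)). fold E0 in H1.
assert (HE : 0 < E t) by (unfold EE; apply exp_pos).
assert (Hp : 0 <= (/2)^(m+n)) by (apply pow_le; lra).
assert (Hq : 0 <= (/2)^n) by (apply pow_le; lra).
assert (2 * ((/2)^n - (/2)^(m + n)) * E t <= 2 * E0 * (/2)^n).
{ assert (2 * ((/2)^n - (/2)^(m + n)) * E t <= 2 * (/2)^n * E t) by nra. nra. }
assert (A1 := Rabs_pos (fst (pic c (m + n)) t - fst (pic c n) t)).
assert (A2 := Rabs_pos (snd (pic c (m + n)) t - snd (pic c n) t)).
split; lra.
Qed.

Definition Uf c t := lim (fun n => fst (pic c n) (clampT T t)).
Definition Wf c t := lim (fun n => snd (pic c n) (clampT T t)).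

Lemma U_approx c n t : Rabs (Uf c t - fst (pic c n) (clampT T t)) <= 2 * E0 * (/2)^n.
Proof.
apply (cauchy_lim (fun n => fst (pic c n) (clampT T t))). intros k m.
apply pic_comp_bound. apply clampT_in; lra.
Qed.
Lemma W_approx c n t : Rabs (Wf c t - snd (pic c n) (clampT T t)) <= 2 * E0 * (/2)^n.
Proof.
apply (cauchy_lim (fun n => snd (pic c n) (clampT T t))). intros k m.
apply pic_comp_bound. apply clampT_in; lra.
Qed.

Lemma pic_lip c n x y : Rabs (fst (pic c n) x - fst (pic c n) y) <= KK T beta * Rabs (x - y) /\
  Rabs (snd (pic c n) x - snd (pic c n) y) <= KK T beta * Rabs (x - y).
Proof.
assert (HK := KK_pos T beta hT hbT).
destruct n as [|n]; simpl.
- rewrite !Rminus_diag, !Rabs_R0. assert (0 <= KK T beta * Rabs (x - y)) by (apply Rmult_le_pos; [lra|apply Rabs_pos]). lra.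
- destruct (pic_cont c n) as [C1 C2]. split.
  + apply (deriv_lip _ (fun t => Gf T beta (snd (pic c n) t))).
    * intros z. apply (deriv_cminus c (fun s => Gf T beta (snd (pic c n) s)) T z). apply cont_Gf_comp; auto.
    * intros z. eapply Rle_trans. apply g_bound, rr_range; auto.
      unfold KK, LL. assert (H := Rabs_pos beta). lra.
  + apply (deriv_lip _ (fun t => beta * cos (fst (pic c n) t))).
    * intros z. unfold Fw.
      apply (deriv_ckminus (phi c) beta (fun s => cos (fst (pic c n) s)) T z (cont_cos_comp _ C1)).
    * intros z. rewrite Rabs_mult. assert (Rabs (cos (fst (pic c n) z)) <= 1) by (apply Rabs_le, COS_bound).
      unfold KK. assert (H3 := LL_pos T beta hT hbT). assert (H2 := Rabs_pos beta). nra.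
Qed.

Lemma U_lip c x y : Rabs (Uf c x - Uf c y) <= KK T beta * Rabs (x - y).
Proof.
apply (le_geo _ _ (4 * E0)). assert (H := E0_pos). lra.
intros n.
assert (H1 := U_approx c n x). assert (H2 := U_approx c n y).
assert (H3 := proj1 (pic_lip c n (clampT T x) (clampT T y))).
assert (H4 := clampT_lip T x y ltac:(lra)).
assert (HK := KK_pos T beta hT hbT).
assert (KK T beta * Rabs (clampT T x - clampT T y) <= KK T beta * Rabs (x - y)) by (apply Rmult_le_compat_l; lra).
set (a := fst (pic c n) (clampT T x)) in *. set (b := fst (pic c n) (clampT T y)) in *.
replace (Uf c x - Uf c y) with ((Uf c x - a) + (a - b) - (Uf c y - b)) by ring.
assert (T1 := Rabs_triang ((Uf c x - a) + (a - b)) (- (Uf c y - b))).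
assert (T2 := Rabs_triang (Uf c x - a) (a - b)). rewrite Rabs_Ropp in T1.
unfold Rminus in *. lra.
Qed.

Lemma W_lip c x y : Rabs (Wf c x - Wf c y) <= KK T beta * Rabs (x - y).
Proof.
apply (le_geo _ _ (4 * E0)). assert (H := E0_pos). lra.
intros n.
assert (H1 := W_approx c n x). assert (H2 := W_approx c n y).
assert (H3 := proj2 (pic_lip c n (clampT T x) (clampT T y))).
assert (H4 := clampT_lip T x y ltac:(lra)).
assert (HK := KK_pos T beta hT hbT).
assert (KK T beta * Rabs (clampT T x - clampT T y) <= KK T beta * Rabs (x - y)) by (apply Rmult_le_compat_l; lra).
set (a := snd (pic c n) (clampT T x)) in *. set (b := snd (pic c n) (clampT T y)) in *.
replace (Wf c x - Wf c y) with ((Wf c x - a) + (a - b) - (Wf c y - b)) by ring.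
assert (T1 := Rabs_triang ((Wf c x - a) + (a - b)) (- (Wf c y - b))).
assert (T2 := Rabs_triang (Wf c x - a) (a - b)). rewrite Rabs_Ropp in T1.
unfold Rminus in *. lra.
Qed.

Lemma U_cont c : cont (Uf c).
Proof. apply (lip_cont _ (KK T beta)). left; apply KK_pos; auto. apply U_lip. Qed.
Lemma W_cont c : cont (Wf c).
Proof. apply (lip_cont _ (KK T beta)). left; apply KK_pos; auto. apply W_lip. Qed.

Lemma abs_le0 x : Rabs x <= 0 -> x = 0.
Proof. unfold Rabs; destruct Rcase_abs; lra. Qed.

Lemma fixed c t : 0 <= t <= T -> Uf c t = FU c (Wf c) t /\ Wf c t = FW c (Uf c) t.
Proof.
intros Ht.
assert (HE0 := E0_pos).
assert (Key : forall n, Rabs (FU c (Wf c) t - Uf c t) + Rabs (FW c (Uf c) t - Wf c t)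
             <= 0 + (4 * E0 * E0 + 4 * E0) * (/2)^n).
{ intros n.
  destruct (pic_cont c n) as [C1 C2].
  assert (S1 := step_est T beta hT hbT c c (Uf c) (Wf c) (fst (pic c n)) (snd (pic c n))
     (4 * E0 * (/2)^n) t (U_cont c) (W_cont c) C1 C2 ltac:(lra)).
  assert (Hp : 0 <= (/2)^n) by (apply pow_le; lra).
  assert (Hyp : forall s, t <= s <= T -> Rabs (Uf c s - fst (pic c n) s) + Rabs (Wf c s - snd (pic c n) s)
     <= 4 * E0 * (/2)^n * E s).
  { intros s Hs. assert (Hs0 : 0 <= s <= T) by lra.
    assert (A1 := U_approx c n s). assert (A2 := W_approx c n s).
    rewrite clampT_id in A1, A2 by auto.
    assert (1 <= E s) by (apply EE_ge1; auto; lra).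
    assert (0 <= 4 * E0 * (/2)^n) by (apply Rmult_le_pos; lra). nra. }
  specialize (S1 Hyp). rewrite !Rminus_diag, !Rabs_R0 in S1.
  assert (Et := E_le0 t (proj1 Ht)). fold E0 in Et.
  assert (HEt : 0 < E t) by (unfold EE; apply exp_pos).
  assert (B1 : 4 * E0 * (/2)^n / 2 * E t <= 2 * E0 * E0 * (/2)^n).
  { assert (0 <= 2 * E0 * (/2)^n) by (apply Rmult_le_pos; lra).
    replace (4 * E0 * (/2)^n / 2 * E t) with ((2 * E0 * (/2)^n) * E t) by field.
    replace (2 * E0 * E0 * (/2)^n) with ((2 * E0 * (/2)^n) * E0) by ring.
    apply Rmult_le_compat_l; lra. }
  assert (A1 := U_approx c (S n) t). assert (A2 := W_approx c (S n) t).
  rewrite clampT_id in A1, A2 by auto. simpl pow in A1, A2. simpl fst in A1; simpl snd in A2.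
  set (a := FU c (snd (pic c n)) t) in *. set (b := FW c (fst (pic c n)) t) in *.
  assert (T1 := Rabs_triang (FU c (Wf c) t - a) (a - Uf c t)).
  assert (T2 := Rabs_triang (FW c (Uf c) t - b) (b - Wf c t)).
  replace (FU c (Wf c) t - a + (a - Uf c t)) with (FU c (Wf c) t - Uf c t) in T1 by ring.
  replace (FW c (Uf c) t - b + (b - Wf c t)) with (FW c (Uf c) t - Wf c t) in T2 by ring.
  rewrite <- Rabs_Ropp in A1, A2. rewrite Ropp_minus_distr in A1, A2.
  nra. }
assert (H := le_geo _ _ (4 * E0 * E0 + 4 * E0) ltac:(nra) Key).
assert (P1 := Rabs_pos (FU c (Wf c) t - Uf c t)). assert (P2 := Rabs_pos (FW c (Uf c) t - Wf c t)).
split.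
- symmetry. apply Rminus_diag_uniq. apply abs_le0. lra.
- symmetry. apply Rminus_diag_uniq. apply abs_le0. lra.
Qed.

Lemma pic_param c d n t : 0 <= t <= T ->
  DD (pic c n) (pic d n) t <= 2 * (Rabs (c - d) + Rabs (phi c - phi d)) * E t.
Proof.
set (dl := Rabs (c - d) + Rabs (phi c - phi d)).
assert (Hd : 0 <= dl) by (unfold dl; assert (H1 := Rabs_pos (c - d)); assert (H2 := Rabs_pos (phi c - phi d)); lra).
revert t. induction n as [|n IH]; intros t Ht.
- unfold DD. simpl. assert (1 <= E t) by (apply EE_ge1; auto; lra). fold dl. nra.
- simpl pic. unfold DD; simpl fst; simpl snd.
  destruct (pic_cont c n) as [C1 C2]. destruct (pic_cont d n) as [C3 C4].
  eapply Rle_trans. apply (step_est T beta hT hbT c d _ _ _ _ (2 * dl)); auto; try lra.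
  + intros s Hs. apply IH. lra.
  + fold dl. assert (1 <= E t) by (apply EE_ge1; auto; lra). nra.
Qed.

Lemma W_param c d t : Rabs (Wf c t - Wf d t) <= 2 * (Rabs (c - d) + Rabs (phi c - phi d)) * E0.
Proof.
set (dl := Rabs (c - d) + Rabs (phi c - phi d)).
assert (Hd : 0 <= dl) by (unfold dl; assert (H1 := Rabs_pos (c - d)); assert (H2 := Rabs_pos (phi c - phi d)); lra).
assert (HE0 := E0_pos).
apply (le_geo _ _ (4 * E0)). lra.
intros n.
assert (H1 := W_approx c n t). assert (H2 := W_approx d n t).
assert (Hin := clampT_in T t ltac:(lra)).
assert (H3 := pic_param c d n (clampT T t) Hin). fold dl in H3. unfold DD in H3.
assert (H4 := E_le0 _ (proj1 Hin)). fold E0 in H4.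
assert (H5 : 2 * dl * E (clampT T t) <= 2 * dl * E0) by (apply Rmult_le_compat_l; lra).
assert (H6 := Rabs_pos (fst (pic c n) (clampT T t) - fst (pic d n) (clampT T t))).
set (a := snd (pic c n) (clampT T t)) in *. set (b := snd (pic d n) (clampT T t)) in *.
replace (Wf c t - Wf d t) with ((Wf c t - a) + (a - b) - (Wf d t - b)) by ring.
assert (T1 := Rabs_triang ((Wf c t - a) + (a - b)) (- (Wf d t - b))).
assert (T2 := Rabs_triang (Wf c t - a) (a - b)). rewrite Rabs_Ropp in T1.
unfold Rminus in *. lra.
Qed.

Definition Gsh c := RInt (fun s => Gf T beta (Wf c s)) 0 T.

Lemma Gsh_param c d : Rabs (Gsh c - Gsh d) <= T * (LL T beta * (2 * (Rabs (c - d) + Rabs (phi c - phi d)) * E0)).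
Proof.
unfold Gsh. rewrite <- RInt_minusR by (apply cont_Gf_comp; auto; apply W_cont).
eapply Rle_trans. apply (abs_RInt_le_const _ 0 T (LL T beta * (2 * (Rabs (c - d) + Rabs (phi c - phi d)) * E0))). lra. apply cont_ex. apply cont_minus; apply cont_Gf_comp; auto; apply W_cont.
intros s _. eapply Rle_trans; [apply Gf_lip; auto|]. apply Rmult_le_compat_l.
left; apply LL_pos; auto. apply W_param.
rewrite Rminus_0_r. lra.
Qed.
End Pic.

Lemma deriv_to_hd a b f x l : is_derive f x l -> has_deriv_on a b f x l.
Proof.
intros H. apply is_derive_Reals in H. intros eps Heps.
destruct (H eps Heps) as [delta Hd]. exists delta. split. apply cond_pos.
intros h Hh Hlt _. apply Hd; auto.
Qed.

Lemma cont_to_coa a b f x : continuous f x -> continuous_on_at a b f x.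
Proof.
intros H. apply continuity_pt_filterlim in H. intros eps Heps.
destruct (H eps Heps) as [alp [Ha Hb]]. exists alp. split; auto.
intros y _ Hy. destruct (Req_dec y x) as [->|Hne].
- rewrite Rminus_diag, Rabs_R0. lra.
- apply Hb. split; [split; [exact I| auto] | simpl; unfold Rdist; auto].
Qed.

Lemma hd_ext a b f h x l : a <= x <= b -> (forall s, a <= s <= b -> h s = f s) ->
  has_deriv_on a b f x l -> has_deriv_on a b h x l.
Proof.
intros Hx He H eps Heps. destruct (H eps Heps) as [d [Hd Hf]]. exists d. split; auto.
intros k Hk Hlt Hin. rewrite !He by auto. apply Hf; auto.
Qed.

Lemma psi_ge w : 0 <= w < 1 -> w <= psi w.
Proof.
intros Hw. unfold psi.
assert (H1 : 0 < 1 - w^2) by (simpl; nra).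
assert (Hs := sqrt_lt_R0 _ H1).
assert (Hs1 : sqrt (1 - w^2) <= 1) by (apply Rle_trans with (sqrt 1); [apply sqrt_le_1_alt; simpl; nra | rewrite sqrt_1; lra]).
assert (1 <= / sqrt (1 - w^2)).
{ apply Rle_trans with (/1); [rewrite Rinv_1; lra | apply Rinv_le_contravar; lra]. }
unfold Rdiv. nra.
Qed.

Lemma psi_le w : -1 < w <= 0 -> psi w <= w.
Proof.
intros Hw. unfold psi.
assert (H1 : 0 < 1 - w^2) by (simpl; nra).
assert (Hs := sqrt_lt_R0 _ H1).
assert (Hs1 : sqrt (1 - w^2) <= 1) by (apply Rle_trans with (sqrt 1); [apply sqrt_le_1_alt; simpl; nra | rewrite sqrt_1; lra]).
assert (1 <= / sqrt (1 - w^2)).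
{ apply Rle_trans with (/1); [rewrite Rinv_1; lra | apply Rinv_le_contravar; lra]. }
unfold Rdiv. nra.
Qed.

Section Final.
Variables T beta : R.
Hypothesis hT : 0 < T.
Hypothesis hbT : Rabs beta * T < 1/2.

Definition cp (p : R) := g (1/2) p.

Lemma phi_cp p : phi (cp p) = clamp (1/2) p.
Proof.
unfold cp, g. apply phi_psi. assert (H := clamp_bound (1/2) p ltac:(lra)). apply abs_inv in H. lra.
Qed.

Lemma phi_cp_bound p : Rabs (phi (cp p)) <= 1/2.
Proof. rewrite phi_cp. apply clamp_bound. lra. Qed.

Lemma W_bound c t : Rabs (phi c) <= 1/2 -> 0 <= t <= T ->
  Rabs (Wf T beta c t - phi c) <= Rabs beta * T.
Proof.
intros Hc Ht. rewrite (proj2 (fixed T beta hT hbT c t Ht)). unfold Fw.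
replace (phi c - beta * RInt (fun s => cos (Uf T beta c s)) t T - phi c)
  with (- (beta * RInt (fun s => cos (Uf T beta c s)) t T)) by ring.
rewrite Rabs_Ropp, Rabs_mult. apply Rmult_le_compat_l. apply Rabs_pos.
eapply Rle_trans. apply (abs_RInt_le_const _ t T 1). lra.
apply cont_ex, cont_cos_comp, U_cont; auto.
intros s _. apply Rabs_le, COS_bound. lra.
Qed.

Lemma W_rr c t : Rabs (phi c) <= 1/2 -> 0 <= t <= T -> Rabs (Wf T beta c t) <= rr T beta.
Proof.
intros Hc Ht. assert (H := W_bound c t Hc Ht). unfold rr.
apply abs_inv in H. apply abs_inv in Hc. apply Rabs_le. lra.
Qed.

Definition Hs p := Gsh T beta (cp p).

Lemma Hs_cont : continuity Hs.
Proof.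
intros x. apply continuity_pt_filterlim.
assert (HL := LL_pos T beta hT hbT). assert (HE := E0_pos T beta hT hbT).
assert (HL2 := Lr_pos (1/2) ltac:(lra)).
apply (lip_cont Hs (T * (LL T beta * (2 * (Lr (1/2) + 1) * E0 T beta)))).
- apply Rmult_le_pos; [lra|]. apply Rmult_le_pos; [lra|]. apply Rmult_le_pos; lra.
- intros a b. unfold Hs. eapply Rle_trans. apply Gsh_param; auto.
  rewrite !phi_cp.
  assert (H1 := g_lip (1/2) a b ltac:(lra)). fold (cp a) (cp b) in H1.
  assert (H2 := clamp_lip (1/2) a b ltac:(lra)).
  assert (Rabs (cp a - cp b) + Rabs (clamp (1/2) a - clamp (1/2) b) <= (Lr (1/2) + 1) * Rabs (a - b)) by lra.
  assert (H3 := Rabs_pos (a - b)).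
  assert (H4 : 0 <= LL T beta * E0 T beta) by nra.
  replace (T * (LL T beta * (2 * (Rabs (cp a - cp b) + Rabs (clamp (1 / 2) a - clamp (1 / 2) b)) * E0 T beta)))
    with ((2 * T * (LL T beta * E0 T beta)) * (Rabs (cp a - cp b) + Rabs (clamp (1 / 2) a - clamp (1 / 2) b))) by ring.
  replace (T * (LL T beta * (2 * (Lr (1 / 2) + 1) * E0 T beta)) * Rabs (a - b))
    with ((2 * T * (LL T beta * E0 T beta)) * ((Lr (1/2) + 1) * Rabs (a - b))) by ring.
  apply Rmult_le_compat_l; [nra| lra].
Qed.

Lemma Hs_pos : 0 < Hs (1/2).
Proof.
unfold Hs, Gsh.
assert (Hc : phi (cp (1/2)) = 1/2) by (rewrite phi_cp; apply clamp_id; rewrite Rabs_pos_eq; lra).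
set (c := cp (1/2)) in *.
set (m := 1/2 - Rabs beta * T).
assert (Hm : 0 < m) by (unfold m; lra).
apply Rlt_le_trans with (RInt (fun _ => m) 0 T).
- rewrite RInt_const. unfold scal; simpl. unfold mult; simpl. nra.
- apply RInt_le. lra. apply cont_ex. intros x; apply continuous_const.
  apply cont_ex, cont_Gf_comp, W_cont; auto.
  intros s Hs0.
  assert (Hb : Rabs (phi c) <= 1/2) by (rewrite Hc, Rabs_pos_eq; lra).
  assert (H1 := W_bound c s Hb ltac:(lra)). assert (H2 := W_rr c s Hb ltac:(lra)).
  assert (Hrr := rr_range T beta hT hbT).
  unfold Gf, g. rewrite clamp_id by auto.
  apply abs_inv in H1. apply abs_inv in H2. rewrite Hc in H1.
  assert (H3 := psi_ge (Wf T beta c s) ltac:(unfold m in *; lra)). unfold m in *. lra.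
Qed.

Lemma Hs_neg : Hs (-(1/2)) < 0.
Proof.
unfold Hs, Gsh.
assert (Hc : phi (cp (-(1/2))) = -(1/2)) by (rewrite phi_cp; apply clamp_id; rewrite Rabs_Ropp, Rabs_pos_eq; lra).
set (c := cp (-(1/2))) in *.
set (m := 1/2 - Rabs beta * T).
assert (Hm : 0 < m) by (unfold m; lra).
apply Rle_lt_trans with (RInt (fun _ => - m) 0 T).
- apply RInt_le. lra.
  apply cont_ex, cont_Gf_comp, W_cont; auto.
  apply cont_ex. intros x; apply continuous_const.
  intros s Hs0.
  assert (Hb : Rabs (phi c) <= 1/2) by (rewrite Hc, Rabs_Ropp, Rabs_pos_eq; lra).
  assert (H1 := W_bound c s Hb ltac:(lra)). assert (H2 := W_rr c s Hb ltac:(lra)).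
  assert (Hrr := rr_range T beta hT hbT).
  unfold Gf, g. rewrite clamp_id by auto.
  apply abs_inv in H1. apply abs_inv in H2. rewrite Hc in H1.
  assert (H3 := psi_le (Wf T beta c s) ltac:(unfold m in *; lra)). unfold m in *. lra.
- rewrite RInt_const. unfold scal; simpl. unfold mult; simpl. nra.
Qed.

Lemma exists_sol : exists u, is_solution T beta u.
Proof.
destruct (IVT Hs (-(1/2)) (1/2) Hs_cont ltac:(lra) Hs_neg Hs_pos) as [p [_ Hp]].
set (c := cp p).
assert (Hcb : Rabs (phi c) <= 1/2) by apply phi_cp_bound.
set (U := Uf T beta c). set (W := Wf T beta c).
assert (HU : cont U) by (apply U_cont; auto). assert (HW : cont W) by (apply W_cont; auto).
assert (HGW : cont (fun s => Gf T beta (W s))) by (apply cont_Gf_comp; auto).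
set (u := fun t => c - RInt (fun s => Gf T beta (W s)) t T).
assert (Hud : forall x, is_derive u x (Gf T beta (W x))).
{ intros x. apply (deriv_cminus c (fun s => Gf T beta (W s)) T x HGW). }
assert (HuU : forall t, 0 <= t <= T -> U t = u t).
{ intros t Ht. apply (proj1 (fixed T beta hT hbT c t Ht)). }
assert (Hrr := rr_range T beta hT hbT).
exists u, (fun t => Gf T beta (W t)). split; [|split; [|split]].
- split.
  + intros x _. apply deriv_to_hd, Hud.
  + intros x _. apply cont_to_coa, HGW.
- split.
  + intros x Hx.
    apply hd_ext with (f := Fw T beta c U); auto.
    * intros s Hs0. cbv beta. unfold U. rewrite <- (proj2 (fixed T beta hT hbT c s Hs0)). fold W.
      unfold Gf, g. rewrite clamp_id by (apply W_rr; auto).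
      apply phi_psi. assert (H := W_rr c s Hcb Hs0). apply abs_inv in H. fold W in H. lra.
    * rewrite <- (HuU x Hx). apply deriv_to_hd.
      apply (deriv_ckminus (phi c) beta (fun s => cos (U s)) T x (cont_cos_comp _ HU)).
  + intros x _. apply cont_to_coa.
    apply (@continuous_mult R_UniformSpace R_AbsRing (fun _ => beta) (fun t => cos (u t))).
    apply continuous_const.
    apply (continuous_comp u cos). apply (@ex_derive_continuous R_AbsRing R_NormedModule). eexists; apply Hud.
    apply (lip_cont cos 1); [lra| apply cos_lip].
- unfold u. rewrite RInt_point. unfold zero; simpl.
  unfold Hs in Hp. unfold Gsh in Hp. fold c in Hp. fold W in Hp. rewrite Hp. ring.
- unfold u. rewrite RInt_point. unfold zero; simpl.
  assert (HWT : W T = phi c).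
  { unfold W. rewrite (proj2 (fixed T beta hT hbT c T ltac:(lra))). unfold Fw. rewrite RInt_point.
    unfold zero; simpl. ring. }
  rewrite HWT. unfold Gf, g. rewrite clamp_id. rewrite psi_phi. ring.
  eapply Rle_trans. apply Hcb. unfold rr. assert (0 <= Rabs beta * T) by (apply Rmult_le_pos; [apply Rabs_pos|lra]). lra.
Qed.
End Final.

Theorem mainTheorem9 (T beta : R) (hT : 0 < T) (hb : Rabs beta < 1 / (2 * T)) :
  exists u : R -> R, is_solution T beta u.
Proof.
apply exists_sol. auto.
assert (H : Rabs beta * T < 1 / (2 * T) * T) by (apply Rmult_lt_compat_r; auto).
replace (1 / (2 * T) * T) with (1/2) in H by (field; lra). exact H.
Qed.
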